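(* Let $(V,\kappa,\varpi,\Theta)$ be a synergistic feedback quadruple relative to a compact set $\mathcal{A}$, with gap exceeding $\delta>0$, for the extended system, where $\kappa$ has the decomposition $\kappa(x,\theta)=\varsigma(x)+\Upsilon(x)\sigma(x,\theta)$, and suppose Assumption 1 holds with constant $c_\kappa>0$. Choose $0<\gamma_s<\delta/c_\kappa$ and $k_\eta>0$, and define $V_s,\kappa_s$ as below. Then $(V_s,\kappa_s,\varpi,\Theta)$ is a synergistic feedback quadruple relative to the set $\mathcal{A}_s=\{(x,\eta,\theta)\in\mathcal{X}_s\times\mathbb{R}^r:(x,\theta)\in\mathcal{A},\ \eta=\sigma(x,\theta)\}$ for the smooth extended system, with gap exceeding any $\delta_s\in(0,\delta-\gamma_sc_\kappa]$.
   Context: Let $\mathcal{X}\subseteq\mathbb{R}^n$ be closed and nonempty, and let $f:\mathcal{X}\to\mathbb{R}^n$, $g:\mathcal{X}\to\mathbb{R}^{n\times m}$ be smooth, defining the control system $\dot x=f(x)+g(x)u$. Let $r\ge 1$, let $\Theta\subset\mathbb{R}^r$ be finite and nonempty, and let $\varpi:\mathcal{X}\times\mathbb{R}^r\to\mathbb{R}^r$ be smooth. The extended system is $\frac{d}{dt}(x,\theta)=f_c(x,\theta)+g_c(x,\theta)u$ with $f_c(x,\theta)=(f(x),\varpi(x,\theta))$ and $g_c(x,\theta)=(g(x),0)$. General definitions (for any system $\dot z=\tilde f(z,\theta)+\tilde g(z,\theta)v$ on $\mathcal{Z}\times\mathbb{R}^r$, $\mathcal{Z}$ closed, with $\dot\theta$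 being the last block of the drift): for smooth $W:\mathcal{Z}\times\mathbb{R}^r\to\mathbb{R}_{\ge0}$ and feedback $k$, $\mu_{W,\Theta}(z,\theta)=W(z,\theta)-\min_{\bar\theta\in\Theta}W(z,\bar\theta)$; $\mathcal{E}_W=\{(z,\theta):\langle\nabla W,\tilde f+\tilde g k\rangle=0\}$ with $\nabla W$ the full gradient; $\Psi_W\subseteq\mathcal{E}_W$ is the largest subset of $\mathcal{E}_W$ that is weakly invariant (weakly forward and backward invariant) for the closed-loop flow $\dot z=\tilde f+\tilde gk$. Given compact $\mathcal{A}'$ and $\delta'>0$, $(W,k,\varpi,\Theta)$ is a synergistic feedback quadruple relative to $\mathcal{A}'$ for that system with gap exceeding $\delta'$ if (C1) every sublevel set $\{W\le\epsilon\}$, $\epsilon\ge0$, is compact; (C2) $W$ is positive definite with respect to $\mathcal{A}'$; (C3) $\langle\nabla W,\tilde f+\tilde gk\rangle\le0$ everywhere; (C4) $\inf_{\Psi_W\setminus\mathcal{A}'}\mu_{W,\Theta}>\delta'$. (For the extended system this is applied with $z=x$, $\tilde f=f_c$, $\tilde g=g_c$.) Decomposition: $\varsigma:\mathcal{X}\to\mathbb{R}^m$, $\Upsilon:\mathcal{X}\to\mathbb{R}^{m\times s}$, $\sigma:\mathcal{X}\times\mathbb{R}^r\to\mathbb{R}^s$ smooth with $\kappa(x,\theta)=\varsigma(x)+\Upsilon(x)\sigma(x,\theta)$; set $\bar\kappa(x,\eta)=\varsigma(x)+\Upsilon(x)\eta$ for $\eta\in\mathbb{R}^s$. Assumption 1: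 there is $c_\kappa>0$ with $\max_{\bar\theta\in\Theta}\|\sigma(x,\theta)-\sigma(x,\bar\theta)\|^2\le2c_\kappa$ for all $(x,\theta)\in\Psi_V\setminus\mathcal{A}$, where $\Psi_V$ is defined for the extended system with $W=V$, $k=\kappa$. Smooth extended system: state $x_s=(x,\eta)\in\mathcal{X}_s:=\mathcal{X}\times\mathbb{R}^s$ and $\theta\in\mathbb{R}^r$, with $\dot x=f(x)+g(x)\bar\kappa(x,\eta)$, $\dot\eta=u_s$, $\dot\theta=\varpi(x,\theta)$, i.e. drift $f_s=(f+g\bar\kappa,0,\varpi)$ and input matrix $g_s=(0,I_s,0)$. $V_s(x_s,\theta)=V(x,\theta)+\frac{\gamma_s}{2}\|\eta-\sigma(x,\theta)\|^2$, and $\kappa_s(x_s,\theta)=-k_\eta(\eta-\sigma(x,\theta))+\mathcal{D}_t\sigma(x,\theta)-\frac{1}{\gamma_s}\Upsilon(x)^\top g(x)^\top\nabla_xV(x,\theta)$, where $\mathcal{D}_t\sigma(x,\theta)=\mathcal{D}_x\sigma(x,\theta)(f(x)+g(x)\bar\kappa(x,\eta))+\mathcal{D}_\theta\sigma(x,\theta)\varpi(x,\theta)$ and $\mathcal{D}_x,\mathcal{D}_\theta$ denote Jacobians. *)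

(* Defs.v *)
From HB Require Import structures.
From mathcomp Require Import all_boot all_order all_algebra.
From mathcomp Require Import all_classical all_reals all_analysis.
Set Implicit Arguments. Unset Strict Implicit. Unset Printing Implicit Defensive.
Import Order.TTheory GRing.Theory Num.Theory.
Import numFieldNormedType.Exports.
Local Open Scope classical_set_scope.
Local Open Scope ring_scope.

Section Defs.
Variable R : realType.

Fixpoint Ck (U V : normedModType R) (k : nat) (f : U -> V) : Prop :=
  (forall x, differentiable f x) /\
  match k with 0%N => True | k'.+1 => forall v : U, Ck k' ('D_v f) end.

Definition smooth (U V : normedModType R) (f : U -> V) : Prop :=
  forall k, Ck k f.

Definition sqnorm n (v : 'cV[R]_n) : R := \sum_(i < n) (v i ord0) ^+ 2.

Definition ecol n (i : 'I_n) : 'cV[R]_n := delta_mx i ord0.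

Definition gradx n r (W : 'cV[R]_n * 'cV[R]_r -> R) (xi : 'cV[R]_n * 'cV[R]_r)
  : 'cV[R]_n := \col_(i < n) 'D_(ecol i, 0) W xi.

Definition jacx n r s (F : 'cV[R]_n * 'cV[R]_r -> 'cV[R]_s)
  (xi : 'cV[R]_n * 'cV[R]_r) : 'M[R]_(s, n) :=
  \matrix_(i < s, j < n) ('D_(ecol j, 0) F xi) i ord0.

Definition jact n r s (F : 'cV[R]_n * 'cV[R]_r -> 'cV[R]_s)
  (xi : 'cV[R]_n * 'cV[R]_r) : 'M[R]_(s, r) :=
  \matrix_(i < s, j < r) ('D_(0, ecol j) F xi) i ord0.

(* State space Z x R^r, Z a subset of a normed space U.
   fz : z-block of the drift, w : theta-block of the drift,
   G xi v : the input matrix (zero theta-block) applied to v. *)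
Section Generic.
Variables (U : normedModType R) (r mi : nat).
Local Notation S := (U * 'cV[R]_r)%type.
Variables (Z : set U) (fz : S -> U) (G : S -> 'cV[R]_mi -> U)
          (w : S -> 'cV[R]_r).

Definition domain : set S := [set xi | Z xi.1].

Definition clvf (k : S -> 'cV[R]_mi) (xi : S) : S :=
  (fz xi + G xi (k xi), w xi).

Definition sol_on (k : S -> 'cV[R]_mi) (I : set R) (phi : R -> S) : Prop :=
  forall t, I t -> domain (phi t) /\ is_derive t 1 phi (clvf k (phi t)).

Definition weakly_fwd_inv (k : S -> 'cV[R]_mi) (M : set S) : Prop :=
  forall xi, M xi -> exists phi : R -> S,
    phi 0 = xi /\ sol_on k [set t | 0 <= t] phi /\
    (forall t, 0 <= t -> M (phi t)).

Definition weakly_bwd_inv (k : S -> 'cV[R]_mi) (M : set S) : Prop :=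
  forall q, M q -> forall T : R, 0 < T -> exists phi : R -> S,
    M (phi 0) /\ phi T = q /\ sol_on k [set t | 0 <= t <= T] phi /\
    (forall t, 0 <= t <= T -> M (phi t)).

Definition weakly_inv (k : S -> 'cV[R]_mi) (M : set S) : Prop :=
  weakly_fwd_inv k M /\ weakly_bwd_inv k M.

(* E_W : <grad W, f~ + g~ k> = 0  (full gradient; written as the differential
   of W applied to the closed-loop vector field) *)
Definition EW (W : S -> R) (k : S -> 'cV[R]_mi) : set S :=
  [set xi | domain xi /\ 'd W xi (clvf k xi) = 0].

(* Psi_W : largest weakly invariant subset of E_W (union of all of them) *)
Definition PsiW (W : S -> R) (k : S -> 'cV[R]_mi) : set S :=
  \bigcup_(M in [set M : set S | M `<=` EW W k /\ weakly_inv k M]) M.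

Definition muW (W : S -> R) (Theta : set 'cV[R]_r) (xi : S) : R :=
  W xi - inf [set W (xi.1, tb) | tb in Theta].

Definition synergistic (W : S -> R) (k : S -> 'cV[R]_mi)
   (Theta : set 'cV[R]_r) (A' : set S) (delta' : R) : Prop :=
  smooth W /\ (forall xi, domain xi -> 0 <= W xi) /\
   (forall eps : R, 0 <= eps ->
              compact [set xi | domain xi /\ W xi <= eps]) /\
   (forall xi, domain xi -> (W xi = 0 <-> A' xi)) /\
   (forall xi, domain xi -> 'd W xi (clvf k xi) <= 0) /\
   (delta'%:E < ereal_inf [set (muW W Theta xi)%:E
                                     | xi in PsiW W k `\` A'])%E.

End Generic.

Section Construction.
Variables (n m r s : nat).
Variables (f : 'cV[R]_n -> 'cV[R]_n) (g : 'cV[R]_n -> 'M[R]_(n, m))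
  (varpi : 'cV[R]_n * 'cV[R]_r -> 'cV[R]_r)
  (varsigma : 'cV[R]_n -> 'cV[R]_m) (Ups : 'cV[R]_n -> 'M[R]_(m, s))
  (sigma : 'cV[R]_n * 'cV[R]_r -> 'cV[R]_s)
  (V : 'cV[R]_n * 'cV[R]_r -> R).

(* extended system: z = x, drift (f, varpi), input matrix (g, 0) *)
Definition fc (xi : 'cV[R]_n * 'cV[R]_r) : 'cV[R]_n := f xi.1.
Definition gc (xi : 'cV[R]_n * 'cV[R]_r) (u : 'cV[R]_m) : 'cV[R]_n :=
  g xi.1 *m u.

Definition kappa_dec (xi : 'cV[R]_n * 'cV[R]_r) : 'cV[R]_m :=
  varsigma xi.1 + Ups xi.1 *m sigma xi.
Definition kappabar (x : 'cV[R]_n) (eta : 'cV[R]_s) : 'cV[R]_m :=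
  varsigma x + Ups x *m eta.

Local Notation Ss := (('cV[R]_n * 'cV[R]_s) * 'cV[R]_r)%type.

(* smooth extended system: z = x_s = (x, eta);
   drift (f + g kappabar, 0, varpi), input matrix (0, I_s, 0) *)
Definition fs (xi : Ss) : 'cV[R]_n * 'cV[R]_s :=
  (f xi.1.1 + g xi.1.1 *m kappabar xi.1.1 xi.1.2, 0).
Definition gs (xi : Ss) (u : 'cV[R]_s) : 'cV[R]_n * 'cV[R]_s :=
  (0, 1%:M *m u).
Definition varpis (xi : Ss) : 'cV[R]_r := varpi (xi.1.1, xi.2).

Definition Xs (X : set 'cV[R]_n) : set ('cV[R]_n * 'cV[R]_s) :=
  [set xs | X xs.1].

Definition As (X : set 'cV[R]_n) (A : set ('cV[R]_n * 'cV[R]_r)) : set Ss :=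
  [set xi | Xs X xi.1 /\ A (xi.1.1, xi.2) /\ xi.1.2 = sigma (xi.1.1, xi.2)].

Variables (gamma_s k_eta : R).

Definition Vs (xi : Ss) : R :=
  V (xi.1.1, xi.2) + gamma_s / 2 * sqnorm (xi.1.2 - sigma (xi.1.1, xi.2)).

Definition Dt_sigma (xi : Ss) : 'cV[R]_s :=
  let x := xi.1.1 in let eta := xi.1.2 in let th := xi.2 in
  jacx sigma (x, th) *m (f x + g x *m kappabar x eta)
  + jact sigma (x, th) *m varpi (x, th).

Definition kappas (xi : Ss) : 'cV[R]_s :=
  let x := xi.1.1 in let eta := xi.1.2 in let th := xi.2 in
  - (k_eta *: (eta - sigma (x, th))) + Dt_sigma xi
  - gamma_s^-1 *: ((Ups x)^T *m (g x)^T *m gradx V (x, th)).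

End Construction.
End Defs.

(* Main.v *)
Require Import Defs.
From HB Require Import structures.
From mathcomp Require Import all_boot all_order all_algebra.
From mathcomp Require Import all_classical all_reals all_analysis.
From mathcomp Require Import ring lra.
Set Implicit Arguments. Unset Strict Implicit. Unset Printing Implicit Defensive.
Import Order.TTheory GRing.Theory Num.Theory.
Import numFieldNormedType.Exports.
Local Open Scope classical_set_scope.
Local Open Scope ring_scope.
Section S.
Variable R : realType.
Definition lincont (U W : normedModType R) (L : U -> W) := linear L /\ continuous L.

Lemma lc_diff (U W : normedModType R) (L : U -> W) x :
  lincont L -> differentiable L x /\ 'd L x = L :> (U -> W).
Proof.
move=> [Ll Lc].
pose lM := GRing.isLinear.Build _ _ _ _ _ Ll.
pose LL : {linear _ -> _} := HB.pack L lM.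
have -> : L = LL by [].
split; [exact: linear_differentiable | exact: diff_lin].
Qed.

Lemma Ck_diff k (U W : normedModType R) (f : U -> W) : Ck k f -> forall x, differentiable f x.
Proof. by case: k => [[]|k []]. Qed.

Lemma smooth_diff (U W : normedModType R) (f : U -> W) : smooth f -> forall x, differentiable f x.
Proof. by move=> /(_ 0%N) /Ck_diff. Qed.

Lemma smooth_D (U W : normedModType R) (f : U -> W) v : smooth f -> smooth ('D_v f).
Proof. by move=> H k; have [_ ] := H k.+1; apply. Qed.

Lemma Ck_ext k (U W : normedModType R) (f g : U -> W) : Ck k f -> (forall x, f x = g x) -> Ck k g.
Proof. by move=> H /funext <-. Qed.


Lemma Ck_add (U W : normedModType R) k : forall f g : U -> W, Ck k f -> Ck k g -> Ck k (fun x => f x + g x).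
Proof.
elim: k => [|k IH] f g Hf Hg.
  by split => // x; apply: differentiableD; apply: Ck_diff Hf _ || apply: Ck_diff Hg _.
have df := Ck_diff Hf; have dg := Ck_diff Hg.
split; first by move=> x; exact: differentiableD.
move=> v; case: Hf => _ Hf; case: Hg => _ Hg.
refine (Ck_ext (IH _ _ (Hf v) (Hg v)) _) => x.
rewrite [RHS]deriveE; last exact: differentiableD.
by rewrite (diffD (df x) (dg x)) /= -!deriveE.
Qed.

Lemma Ck_cst (U W : normedModType R) k (c : W) : Ck k (fun _ : U => c).
Proof.
elim: k c => [|k IH] c; first by split.
split => [x|v]; first exact: differentiable_cst.
refine (Ck_ext (IH 0) _) => x.
by rewrite deriveE ?diff_cst //; exact: differentiable_cst.
Qed.

Lemma Ck_scale (U W : normedModType R) k (c : R) : forall f : U -> W, Ck k f -> Ck k (fun x => c *: f x).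
Proof.
elim: k => [|k IH] f Hf.
  by split => // x; apply: differentiableZ; apply: Ck_diff Hf _.
have df := Ck_diff Hf.
split; first by move=> x; exact: differentiableZ.
move=> v; case: Hf => _ Hf.
refine (Ck_ext (IH _ (Hf v)) _) => x.
rewrite [RHS]deriveE; last exact: differentiableZ.
by rewrite (diffZ _ (df x)) /= -!deriveE.
Qed.

Lemma Ck_comp_in (U W Y : normedModType R) k : forall (F : W -> Y) (L : U -> W), lincont L -> Ck k F ->
  Ck k (fun x => F (L x)).
Proof.
elim: k => [|k IH] F L HL HF.
  split => // x; apply: (differentiable_comp (f:=L)); first exact: (lc_diff x HL).1.
  exact: Ck_diff HF _.
have dF := Ck_diff HF.
have dc : forall x, differentiable (F \o L) x.
  move=> x; apply: differentiable_comp; first exact: (lc_diff x HL).1.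
  exact: dF.
split; first exact: dc.
move=> v; case: HF => _ HF.
refine (Ck_ext (IH _ _ HL (HF (L v))) _) => x.
rewrite [RHS](@deriveE _ _ _ (F \o L)) // diff_comp //; first last.
  exact: (lc_diff x HL).1.
by rewrite (lc_diff x HL).2 /= -deriveE.
Qed.

Lemma Ck_comp_out (U W Y : normedModType R) k : forall (F : U -> W) (L : W -> Y), lincont L -> Ck k F ->
  Ck k (fun x => L (F x)).
Proof.
elim: k => [|k IH] F L HL HF.
  split => // x; apply: (differentiable_comp (f:=F)); first exact: Ck_diff HF _.
  exact: (lc_diff _ HL).1.
have dF := Ck_diff HF.
have dc : forall x, differentiable (L \o F) x.
  move=> x; apply: differentiable_comp; first exact: dF.
  exact: (lc_diff _ HL).1.
split; first exact: dc.
move=> v; case: HF => _ HF.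
refine (Ck_ext (IH _ _ HL (HF v)) _) => x.
rewrite [RHS](@deriveE _ _ _ (L \o F)) // diff_comp //; first last.
  exact: (lc_diff _ HL).1.
by rewrite (lc_diff _ HL).2 /= -deriveE.
Qed.

Lemma Ck_sum (U W : normedModType R) k p : forall F : 'I_p -> U -> W, (forall i, Ck k (F i)) ->
  Ck k (fun x => \sum_(i < p) F i x).
Proof.
elim: p => [|p IH] F HF.
  by refine (Ck_ext (@Ck_cst U W k 0) _) => x; rewrite big_ord0.
refine (Ck_ext (Ck_add (IH (fun i => F (widen_ord (leqnSn p) i)) (fun i => HF _)) (HF ord_max)) _) => x.
by rewrite big_ord_recr.
Qed.

Lemma smooth_mul (U : normedModType R) : forall k (f g : U -> R), smooth f -> smooth g -> Ck k (fun x => f x * g x).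
Proof.
elim => [|k IH] f g Hf Hg.
  by split => // x; apply: differentiableM; apply: smooth_diff.
have df := smooth_diff Hf; have dg := smooth_diff Hg.
have dm : forall x, differentiable (f * g) x by move=> x; exact: differentiableM.
split; first exact: dm.
move=> v.
have E : forall x, 'D_v (fun x => f x * g x) x = 'D_v f x * g x + f x * 'D_v g x.
  move=> x; have -> : 'D_v (fun x => f x * g x) x = 'D_v (f * g) x by [].
  rewrite deriveM; [|exact: diff_derivable|exact: diff_derivable].
  have -> : forall a b : R, a *: b = a * b by [].
  by rewrite addrC; congr (_ + _); rewrite mulrC.
refine (Ck_ext (Ck_add (IH _ _ (smooth_D v Hf) Hg) (IH _ _ Hf (smooth_D v Hg))) _) => x.
by rewrite E.
Qed.
Lemma lc_fst (A B : normedModType R) : lincont (@fst A B).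
Proof. split; first by move=> a [x y] [z w]. by move=> [a b]; exact: cvg_fst. Qed.
Lemma lc_snd (A B : normedModType R) : lincont (@snd A B).
Proof. split; first by move=> a [x y] [z w]. by move=> [a b]; exact: cvg_snd. Qed.
Lemma lc_comp (A B C : normedModType R) (f : A -> B) (g : B -> C) :
  lincont f -> lincont g -> lincont (fun x => g (f x)).
Proof.
move=> [lf cf] [lg cg]; split; first by move=> a x y; rewrite lf lg.
by move=> x; apply: continuous_comp; [exact: cf | exact: cg].
Qed.
Lemma lc_pair (A B C : normedModType R) (f : A -> B) (g : A -> C) :
  lincont f -> lincont g -> lincont (fun x => (f x, g x)).
Proof.
move=> [lf cf] [lg cg]; split; first by move=> a x y; rewrite lf lg.
by move=> x; apply: cvg_pair; [exact: cf | exact: cg].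
Qed.
Lemma lc_coord p q (i : 'I_p) (j : 'I_q) : lincont (fun M : 'M[R]_(p, q) => M i j).
Proof.
split; last exact: coord_continuous.
by move=> a x y; rewrite !mxE.
Qed.
Lemma smooth_lin (A B : normedModType R) (L : A -> B) : lincont L -> smooth L.
Proof.
move=> HL k; elim: k L HL => [|k IH] L HL; first by split => // x; exact: (lc_diff x HL).1.
split; first by move=> x; exact: (lc_diff x HL).1.
move=> v; refine (Ck_ext (@Ck_cst _ _ k (L v)) _) => x.
by rewrite deriveE ?(lc_diff x HL).2 //; exact: (lc_diff x HL).1.
Qed.

Lemma smooth_Vs n r s (sigma : 'cV[R]_n * 'cV[R]_r -> 'cV[R]_s)
  (V : 'cV[R]_n * 'cV[R]_r -> R) gamma :
  smooth sigma -> smooth V -> smooth (Vs sigma V gamma).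
Proof.
move=> Hs HV k.
pose P := fun xi : ('cV[R]_n * 'cV[R]_s) * 'cV[R]_r => (xi.1.1, xi.2).
have lP : lincont P.
  apply: lc_pair; last exact: lc_snd.
  exact: (lc_comp (lc_fst _ _) (lc_fst _ _)).
have lQ : lincont (fun xi : ('cV[R]_n * 'cV[R]_s) * 'cV[R]_r => xi.1.2).
  exact: (lc_comp (lc_fst _ _) (lc_snd _ _)).
pose h (i : 'I_s) (xi : ('cV[R]_n * 'cV[R]_s) * 'cV[R]_r) : R := xi.1.2 i ord0 + (-1) *: (sigma (P xi)) i ord0.
have Hh : forall i k, Ck k (h i).
  move=> i k'; apply: Ck_add.
    exact: (smooth_lin (lc_comp lQ (lc_coord i ord0))).
  apply: Ck_scale.
  apply: (@Ck_comp_out _ _ _ _ (fun xi => sigma (P xi)) (fun M : 'cV[R]_s => M i ord0)); first exact: lc_coord.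
  by apply: Ck_comp_in => //; exact: Hs.
have H1 : Ck k (fun xi => V (P xi) + gamma / 2 *: \sum_(i < s) (h i xi * h i xi)).
  apply: Ck_add; first by apply: (@Ck_comp_in _ _ _ _ V P) => //; exact: HV.
  apply: Ck_scale; apply: (@Ck_sum _ _ k s (fun i xi => h i xi * h i xi)) => i; apply: (@smooth_mul _ k (h i) (h i)) => k'; exact: Hh.
refine (Ck_ext H1 _) => xi.
rewrite /Vs /sqnorm; congr (_ + _).
have -> : forall a b : R, a *: b = a * b by [].
congr (_ * _); apply: eq_bigr => i _.
by rewrite expr2 /h !mxE scaleN1r.
Qed.
Section Dlemmas.
Variables U W Y : normedModType R.

Lemma D_in (F : W -> Y) (L : U -> W) x v : lincont L -> differentiable F (L x) ->
  'D_v (fun y => F (L y)) x = 'D_(L v) F (L x).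
Proof.
move=> HL dF.
have dL := (lc_diff x HL).1.
rewrite (@deriveE _ _ _ (F \o L)); last exact: differentiable_comp.
by rewrite diff_comp // (lc_diff x HL).2 /= -deriveE.
Qed.

Lemma D_out (F : U -> W) (L : W -> Y) x v : lincont L -> differentiable F x ->
  'D_v (fun y => L (F y)) x = L ('D_v F x).
Proof.
move=> HL dF.
have dL := (lc_diff (F x) HL).1.
rewrite (@deriveE _ _ _ (L \o F)); last exact: differentiable_comp.
by rewrite diff_comp // (lc_diff _ HL).2 /= -deriveE.
Qed.

Lemma D_add (f g : U -> W) x v : differentiable f x -> differentiable g x ->
  'D_v (fun y => f y + g y) x = 'D_v f x + 'D_v g x.
Proof.
move=> df dg; have -> : 'D_v (fun y => f y + g y) x = 'D_v (f + g) x by [].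
by rewrite deriveD //; exact: diff_derivable.
Qed.

Lemma D_scale (f : U -> W) (c : R) x v : differentiable f x ->
  'D_v (fun y => c *: f y) x = c *: 'D_v f x.
Proof.
move=> df; have -> : 'D_v (fun y => c *: f y) x = 'D_v (c \*: f) x by [].
by rewrite deriveZ //; exact: diff_derivable.
Qed.

Lemma D_mul (f g : U -> R) x v : differentiable f x -> differentiable g x ->
  'D_v (fun y => f y * g y) x = 'D_v f x * g x + f x * 'D_v g x.
Proof.
move=> df dg; have -> : 'D_v (fun y => f y * g y) x = 'D_v (f * g) x by [].
rewrite deriveM; [|exact: diff_derivable|exact: diff_derivable].
have -> : forall a b : R, a *: b = a * b by [].
by rewrite addrC; congr (_ + _); rewrite mulrC.
Qed.

Lemma D_sum p (F : 'I_p -> U -> W) x v : (forall i, differentiable (F i) x) ->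
  'D_v (fun y => \sum_(i < p) F i y) x = \sum_(i < p) 'D_v (F i) x.
Proof.
move=> dF.
have -> : (fun y => \sum_(i < p) F i y) = \sum_(i < p) F i.
  by apply: funext => y; rewrite fct_sumE.
rewrite derive_sum //; move=> i; exact: diff_derivable.
Qed.

Lemma Dv_add (f : U -> W) x a b : differentiable f x ->
  'D_(a + b) f x = 'D_a f x + 'D_b f x.
Proof. by move=> df; rewrite !deriveE // linearD. Qed.

Lemma Dv_scale (f : U -> W) x c a : differentiable f x ->
  'D_(c *: a) f x = c *: 'D_a f x.
Proof. by move=> df; rewrite !deriveE // linearZ. Qed.

Lemma Dv_sum (f : U -> W) x p (a : 'I_p -> U) : differentiable f x ->
  'D_(\sum_(i < p) a i) f x = \sum_(i < p) 'D_(a i) f x.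
Proof.
move=> df; rewrite deriveE // linear_sum; apply: eq_bigr => i _; by rewrite deriveE.
Qed.
End Dlemmas.
Lemma col_expand n (a : 'cV[R]_n) : a = \sum_(j < n) a j ord0 *: @ecol R _ j.
Proof.
rewrite {1}(matrix_sum_delta a); apply: eq_bigr => j _; by rewrite big_ord1.
Qed.

Lemma pair_sum_l (A B : normedModType R) p (c : 'I_p -> A) :
  (\sum_(j < p) c j, (0 : B)) = \sum_(j < p) (c j, 0).
Proof.
elim/big_rec2: _ => // j y1 y2 _ <-.
by apply/pair_equal_spec; split => /=; rewrite ?addr0.
Qed.

Lemma pair_sum_r (A B : normedModType R) p (c : 'I_p -> B) :
  ((0 : A), \sum_(j < p) c j) = \sum_(j < p) (0, c j).
Proof.
elim/big_rec2: _ => // j y1 y2 _ <-.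
by apply/pair_equal_spec; split => /=; rewrite ?addr0 ?add0r.
Qed.

Lemma Dx_expand (W : normedModType R) n r (F : 'cV[R]_n * 'cV[R]_r -> W) pt a :
  differentiable F pt ->
  'D_(a, 0) F pt = \sum_(j < n) a j ord0 *: 'D_(@ecol R _ j, 0) F pt.
Proof.
move=> dF; rewrite {1}(col_expand a) pair_sum_l Dv_sum //.
apply: eq_bigr => j _; rewrite -Dv_scale //; congr ('D_ _ F pt).
by apply/pair_equal_spec; split => /=; rewrite ?scaler0.
Qed.

Lemma Dt_expand (W : normedModType R) n r (F : 'cV[R]_n * 'cV[R]_r -> W) pt b :
  differentiable F pt ->
  'D_(0, b) F pt = \sum_(j < r) b j ord0 *: 'D_(0, @ecol R _ j) F pt.
Proof.
move=> dF; rewrite {1}(col_expand b) pair_sum_r Dv_sum //.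
apply: eq_bigr => j _; rewrite -Dv_scale //; congr ('D_ _ F pt).
by apply/pair_equal_spec; split => /=; rewrite ?scaler0.
Qed.

Lemma Dpair_split (W : normedModType R) (A B : normedModType R) (F : A * B -> W) pt a b :
  differentiable F pt -> 'D_(a, b) F pt = 'D_(a, 0) F pt + 'D_(0, b) F pt.
Proof.
move=> dF; rewrite -Dv_add //; congr ('D_ _ F pt).
by apply/pair_equal_spec; split => /=; rewrite ?addr0 ?add0r.
Qed.
Definition dot p (u v : 'cV[R]_p) : R := \sum_(i < p) u i ord0 * v i ord0.

Lemma dot_trmx p q (u : 'cV[R]_p) (M : 'M[R]_(p, q)) (v : 'cV[R]_q) :
  dot u (M *m v) = dot (M^T *m u) v.
Proof.
rewrite /dot.
under eq_bigr => i _ do rewrite mxE big_distrr /=.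
under [RHS]eq_bigr => j _ do rewrite mxE big_distrl /=.
rewrite exchange_big /=; apply: eq_bigr => j _; apply: eq_bigr => i _.
by rewrite mxE; ring.
Qed.

Lemma sqnorm_dot p (u : 'cV[R]_p) : sqnorm u = dot u u.
Proof. by rewrite /sqnorm /dot; apply: eq_bigr => i _; rewrite expr2. Qed.

Lemma D_sub (U W : normedModType R) (f g : U -> W) x v : differentiable f x -> differentiable g x ->
  'D_v (fun y => f y - g y) x = 'D_v f x - 'D_v g x.
Proof.
move=> df dg; have -> : 'D_v (fun y => f y - g y) x = 'D_v (f - g) x by [].
by rewrite deriveB //; exact: diff_derivable.
Qed.

Lemma D_lin (U W : normedModType R) (L : U -> W) x v : lincont L -> 'D_v L x = L v.
Proof. by move=> HL; rewrite deriveE ?(lc_diff x HL).2 //; exact: (lc_diff x HL).1. Qed.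

Lemma diff_sqnorm (U : normedModType R) p (h : U -> 'cV[R]_p) x : differentiable h x ->
  differentiable (fun y => sqnorm (h y)) x.
Proof.
move=> dh.
have -> : (fun y => sqnorm (h y)) = \sum_(i < p) (fun y => h y i ord0 * h y i ord0).
  by apply: funext => y; rewrite fct_sumE /sqnorm; apply: eq_bigr => i _; rewrite expr2.
apply: differentiable_sum => i.
have di : differentiable (fun y => h y i ord0) x.
  exact: (differentiable_comp dh (lc_diff _ (lc_coord i ord0)).1).
exact: (differentiableM di di).
Qed.

Lemma D_sqnorm (U : normedModType R) p (h : U -> 'cV[R]_p) x v : differentiable h x ->
  'D_v (fun y => sqnorm (h y)) x = 2 * dot (h x) ('D_v h x).
Proof.
move=> dh.
have di : forall i, differentiable (fun y => h y i ord0) x.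
  move=> i; exact: (differentiable_comp dh (lc_diff _ (lc_coord i ord0)).1).
have -> : (fun y => sqnorm (h y)) = (fun y => \sum_(i < p) (fun y => h y i ord0 * h y i ord0) y).
  by apply: funext => y; rewrite /sqnorm; apply: eq_bigr => i _; rewrite expr2.
rewrite D_sum; last by move=> i; exact: differentiableM.
rewrite /dot big_distrr /=; apply: eq_bigr => i _.
rewrite D_mul // (@D_out _ _ _ h (fun M : 'cV[R]_p => M i ord0) x v (lc_coord i ord0) dh); ring.
Qed.
Definition Pm n s r (y : ('cV[R]_n * 'cV[R]_s) * 'cV[R]_r) := (y.1.1, y.2).
Lemma lc_Pm n s r : lincont (@Pm n s r).
Proof.
apply: lc_pair; last exact: lc_snd.
exact: (lc_comp (lc_fst _ _) (lc_fst _ _)).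
Qed.
Lemma lc_Qm n s r : lincont (fun y : ('cV[R]_n * 'cV[R]_s) * 'cV[R]_r => y.1.2).
Proof. exact: (lc_comp (lc_fst _ _) (lc_snd _ _)). Qed.

Lemma jacx_expand n r s (F : 'cV[R]_n * 'cV[R]_r -> 'cV[R]_s) pt (a : 'cV[R]_n) :
  \sum_(j < n) a j ord0 *: 'D_(@ecol R _ j, 0) F pt = jacx F pt *m a.
Proof.
apply/matrixP => i k; rewrite summxE mxE; apply: eq_bigr => j _.
by rewrite !mxE (ord1 k) mulrC.
Qed.

Lemma jact_expand n r s (F : 'cV[R]_n * 'cV[R]_r -> 'cV[R]_s) pt (b : 'cV[R]_r) :
  \sum_(j < r) b j ord0 *: 'D_(0, @ecol R _ j) F pt = jact F pt *m b.
Proof.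
apply/matrixP => i k; rewrite summxE mxE; apply: eq_bigr => j _.
by rewrite !mxE (ord1 k) mulrC.
Qed.

Lemma grad_expand n r (F : 'cV[R]_n * 'cV[R]_r -> R) pt (a : 'cV[R]_n) :
  \sum_(j < n) a j ord0 *: 'D_(@ecol R _ j, 0) F pt = dot (gradx F pt) a.
Proof.
rewrite /dot; apply: eq_bigr => j _.
by rewrite !mxE mulrC.
Qed.

Lemma dot_lin p (u v z : 'cV[R]_p) a b : dot u (a *: v + b *: z) = a * dot u v + b * dot u z.
Proof.
rewrite /dot !big_distrr -big_split /=; apply: eq_bigr => i _; rewrite !mxE; ring.
Qed.

Lemma dotC p (u v : 'cV[R]_p) : dot u v = dot v u.
Proof. by rewrite /dot; apply: eq_bigr => i _; rewrite mulrC. Qed.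

Lemma dVs_eq n m r s f g varpi varsigma Ups (sigma : 'cV[R]_n * 'cV[R]_r -> 'cV[R]_s)
  (V : 'cV[R]_n * 'cV[R]_r -> R) gamma k_eta (xi : ('cV[R]_n * 'cV[R]_s) * 'cV[R]_r) :
  (forall pt, differentiable sigma pt) -> (forall pt, differentiable V pt) -> gamma != 0 ->
  'D_(clvf (@fs R n m r s f g varsigma Ups) (@gs R n r s) (@varpis R n r s varpi)
        (kappas f g varpi varsigma Ups sigma V gamma k_eta) xi) (Vs sigma V gamma) xi
  = 'D_(clvf (fc f) (gc g) varpi (kappa_dec varsigma Ups sigma) (xi.1.1, xi.2)) V (xi.1.1, xi.2)
    - gamma * k_eta * sqnorm (xi.1.2 - sigma (xi.1.1, xi.2)).
Proof.
move=> dsig dV g0.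
case: xi => [[x eta] th] /=.
set w := clvf _ _ _ _ _.
have dVP : forall y : ('cV[R]_n * 'cV[R]_s) * 'cV[R]_r, differentiable (fun y => V (Pm y)) y.
  move=> y; apply: (differentiable_comp (f := @Pm n s r)); [exact: (lc_diff y (@lc_Pm n s r)).1|exact: dV].
have dsP : forall y : ('cV[R]_n * 'cV[R]_s) * 'cV[R]_r, differentiable (fun y => sigma (Pm y)) y.
  move=> y; apply: (differentiable_comp (f := @Pm n s r)); [exact: (lc_diff y (@lc_Pm n s r)).1|exact: dsig].
have dQ : forall y : ('cV[R]_n * 'cV[R]_s) * 'cV[R]_r, differentiable (fun y : ('cV[R]_n * 'cV[R]_s) * 'cV[R]_r => y.1.2) y.
  move=> y; exact: (lc_diff y (@lc_Qm n s r)).1.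
have dh : forall y : ('cV[R]_n * 'cV[R]_s) * 'cV[R]_r, differentiable (fun y => y.1.2 - sigma (Pm y)) y.
  move=> y; exact: differentiableB.
have dsq : forall y : ('cV[R]_n * 'cV[R]_s) * 'cV[R]_r, differentiable (fun y => sqnorm (y.1.2 - sigma (Pm y))) y.
  move=> y; exact: diff_sqnorm.
have -> : Vs sigma V gamma = fun y => V (Pm y) + gamma / 2 *: sqnorm (y.1.2 - sigma (Pm y)) by [].
rewrite D_add //; last exact: differentiableZ.
rewrite D_scale // D_sqnorm // D_sub //.
rewrite (D_in _ (@lc_Pm n s r) (dV _)) (D_in _ (@lc_Pm n s r) (dsig _)) (D_lin _ _ (@lc_Qm n s r)).
have ptE : Pm (x, eta, th) = (x, th) by [].
rewrite ptE.
set pt := (x, th).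
set h := eta - sigma pt.
set A1 := f x + g x *m (varsigma x + Ups x *m sigma pt).
set A2 := g x *m (Ups x *m h).
set c := varpi pt.
have E1 : Pm w = (A1 + A2, c).
  apply/pair_equal_spec; split => //=.
  rewrite /A1 /A2 /h /kappabar addr0 mulmxBr !mulmxDr.
  rewrite mulmxN -!addrA; congr (_ + _); congr (_ + _).
  by rewrite addrC subrK.
have E1' : Pm w = (A1, c) + (A2, 0).
  by rewrite E1; apply/pair_equal_spec; split => //=; rewrite addr0.
have E2 : Pm w = (f x + g x *m kappabar varsigma Ups x eta, c).
  by apply/pair_equal_spec; split => //=; rewrite addr0.
have E3 : w.1.2 = kappas f g varpi varsigma Ups sigma V gamma k_eta (x, eta, th).
  by rewrite /= add0r mul1mx.
rewrite {1}E1' {1}E2 E3.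
rewrite Dv_add; last exact: dV.
rewrite Dx_expand; last exact: dV.
rewrite grad_expand.
rewrite (@Dpair_split _ _ _ sigma); last exact: dsig.
rewrite (@Dx_expand _ _ _ sigma); last exact: dsig.
rewrite (@Dt_expand _ _ _ sigma); last exact: dsig.
rewrite jacx_expand jact_expand.
have E4 : kappas f g varpi varsigma Ups sigma V gamma k_eta (x, eta, th) -
      (jacx sigma pt *m (f x + g x *m kappabar varsigma Ups x eta) + jact sigma pt *m c)
   = (- k_eta) *: h + (- gamma^-1) *: ((Ups x)^T *m (g x)^T *m gradx V pt).
  by rewrite /kappas /Dt_sigma /= addrAC addrK !scaleNr.
rewrite E4 dot_lin.
have -> : clvf (fc f) (gc g) varpi (kappa_dec varsigma Ups sigma) pt = (A1, c) by [].
rewrite /A2 mulmxA dot_trmx trmx_mul [dot (_ *m _) h]dotC sqnorm_dot.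
have -> : forall a b : R, a *: b = a * b by [].
by field.
Qed.
Lemma is_derive_lin (W Y : normedModType R) (phi : R -> W) (L : W -> Y) (t : R) d :
  lincont L -> is_derive t (1:R) phi d -> is_derive t (1:R) (fun u => L (phi u)) (L d).
Proof.
move=> HL [dphi Dphi].
have dp : differentiable phi t by apply/derivable1_diffP.
apply: DeriveDef.
- apply/derivable1_diffP; apply: (differentiable_comp (f:=phi)) => //; exact: (lc_diff _ HL).1.
- by rewrite (D_out _ HL dp) Dphi.
Qed.
Lemma continuous_trmx p q : continuous (fun M : 'M[R]_(p, q) => M^T).
Proof.
move=> u A /nbhs_ballP[e /= e0 eA].
apply/nbhs_ballP; exists e => //= v [_ uv]; apply: eA; split => // i j.
by rewrite !mxE; exact: uv.
Qed.

Lemma lc_zero (A B : normedModType R) : lincont (fun _ : A => (0 : B)).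
Proof. by split; [move=> a x y; rewrite scaler0 addr0 | exact: cst_continuous]. Qed.

Lemma lc_id (A : normedModType R) : lincont (fun x : A => x).
Proof. by split; [move=> a x y|move=> x]. Qed.

Lemma compact_lift n r s (K1 : set ('cV[R]_n * 'cV[R]_r))
  (sigma : 'cV[R]_n * 'cV[R]_r -> 'cV[R]_s) (c : R) :
  compact K1 -> (forall pt, differentiable sigma pt) ->
  exists K2 : set (('cV[R]_n * 'cV[R]_s) * 'cV[R]_r), compact K2 /\
    forall xi, K1 (Pm xi) -> (forall i, `|(xi.1.2 - sigma (Pm xi)) i ord0| <= c) -> K2 xi.
Proof.
move=> cK1 dsig.
pose box := [set v : 'rV[R]_s | forall i, `[- c, c]%classic (v ord0 i)].
have cbox : compact box.
  by apply: (@rV_compact _ _ (fun=> `[- c, c]%classic)) => _; exact: segment_compact.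
pose B := (fun M : 'rV[R]_s => M^T) @` box.
have cB : compact B.
  by apply: continuous_compact => //; apply: continuous_subspaceT; exact: continuous_trmx.
pose Phi := fun p : ('cV[R]_n * 'cV[R]_r) * 'cV[R]_s => ((p.1.1, sigma p.1 + p.2), p.1.2).
have cPhi : continuous Phi.
  pose L1 := fun p : ('cV[R]_n * 'cV[R]_r) * 'cV[R]_s => ((p.1.1, p.2), p.1.2).
  pose L2 := fun v : 'cV[R]_s => (((0 : 'cV[R]_n), v), (0 : 'cV[R]_r)).
  have lL1 : lincont L1.
    apply: lc_pair; last exact: (lc_comp (lc_fst _ _) (lc_snd _ _)).
    apply: lc_pair; last exact: lc_snd.
    exact: (lc_comp (lc_fst _ _) (lc_fst _ _)).
  have lL2 : lincont L2.
    apply: lc_pair; last exact: lc_zero.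
    apply: lc_pair; [exact: lc_zero | exact: lc_id].
  have -> : Phi = fun p => L1 p + L2 (sigma p.1).
    apply: funext => p; apply/pair_equal_spec; split => /=; last by rewrite addr0.
    by apply/pair_equal_spec; split => /=; [rewrite addr0 | rewrite addrC].
  move=> p; apply: differentiable_continuous; apply: differentiableD.
    exact: (lc_diff p lL1).1.
  apply: (differentiable_comp (f := fun p : ('cV[R]_n * 'cV[R]_r) * 'cV[R]_s => sigma p.1)).
    apply: (differentiable_comp (f := fst)); first exact: (lc_diff p (lc_fst _ _)).1.
    exact: dsig.
  exact: (lc_diff _ lL2).1.
exists (Phi @` (K1 `*` B)); split.
  apply: continuous_compact; first exact: continuous_subspaceT.
  exact: compact_setX.
move=> xi HK Hc; exists (Pm xi, xi.1.2 - sigma (Pm xi)).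
  split => //; exists (xi.1.2 - sigma (Pm xi))^T; last exact: trmxK.
  move=> i; rewrite mxE /= in_itv /= -ler_norml; exact: Hc.
case: xi HK Hc => [[x eta] th] /= _ _.
rewrite /Pm /=; congr (_, _); congr (_, _).
by rewrite addrC subrK.
Qed.
End S.

Lemma sqnorm_ge0 (R : realType) p (v : 'cV[R]_p) : 0 <= sqnorm v.
Proof. by apply: sumr_ge0 => i _; exact: sqr_ge0. Qed.

Lemma sqnorm_eq0 (R : realType) p (v : 'cV[R]_p) : sqnorm v = 0 -> v = 0.
Proof.
move=> /eqP; rewrite psumr_eq0 => [/allP H|i _]; last exact: sqr_ge0.
apply/matrixP => i j; rewrite (ord1 j) mxE.
have := H i (mem_index_enum _); rewrite /= sqrf_eq0 => /eqP ->; done.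
Qed.

Lemma sqnorm0 (R : realType) p : sqnorm (0 : 'cV[R]_p) = 0.
Proof. by rewrite /sqnorm big1 // => i _; rewrite mxE expr0n. Qed.

Theorem proposition1 (R : realType) (n m r s : nat)
  (X : set 'cV[R]_n)
  (f : 'cV[R]_n -> 'cV[R]_n) (g : 'cV[R]_n -> 'M[R]_(n, m))
  (Theta : set 'cV[R]_r) (varpi : 'cV[R]_n * 'cV[R]_r -> 'cV[R]_r)
  (V : 'cV[R]_n * 'cV[R]_r -> R)
  (varsigma : 'cV[R]_n -> 'cV[R]_m) (Ups : 'cV[R]_n -> 'M[R]_(m, s))
  (sigma : 'cV[R]_n * 'cV[R]_r -> 'cV[R]_s)
  (A : set ('cV[R]_n * 'cV[R]_r)) (delta c_kappa gamma_s k_eta : R) :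
  closed X -> X !=set0 ->
  smooth f -> smooth g ->
  (0 < r)%N -> finite_set Theta -> Theta !=set0 ->
  smooth varpi ->
  smooth varsigma -> smooth Ups -> smooth sigma ->
  compact A -> 0 < delta ->
  (* (V, kappa, varpi, Theta) synergistic for the extended system *)
  synergistic X (fc f) (gc g) varpi V (kappa_dec varsigma Ups sigma)
    Theta A delta ->
  (* Assumption 1 *)
  0 < c_kappa ->
  (forall xi, (PsiW X (fc f) (gc g) varpi V (kappa_dec varsigma Ups sigma)
                 `\` A) xi ->
     forall tb, Theta tb -> sqnorm (sigma xi - sigma (xi.1, tb)) <= 2 * c_kappa) ->
  0 < gamma_s -> gamma_s < delta / c_kappa -> 0 < k_eta ->
  forall delta_s : R, 0 < delta_s -> delta_s <= delta - gamma_s * c_kappa ->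
  synergistic (@Xs R n s X) (fs f g varsigma Ups) (@gs R n r s)
    (@varpis R n r s varpi)
    (Vs sigma V gamma_s)
    (kappas f g varpi varsigma Ups sigma V gamma_s k_eta)
    Theta (As sigma X A) delta_s.
Proof.
move=> cX X0 sf sg r0 fT T0 sw svs sU ss cA d0 [sV [V0 [C1 [C2 [C3 C4]]]]] ck0 As1 g0 gd ke0 ds ds0 dsle.
have dV := smooth_diff sV.
have dsig := smooth_diff ss.
have sVs := smooth_Vs gamma_s ss sV.
have dVs := smooth_diff sVs.
have gn0 : gamma_s != 0 by rewrite gt_eqF.
have key : forall xi, 'd (Vs sigma V gamma_s) xi
   (clvf (fs f g varsigma Ups) (@gs R n r s) (@varpis R n r s varpi)
        (kappas f g varpi varsigma Ups sigma V gamma_s k_eta) xi) =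
   'd V (xi.1.1, xi.2) (clvf (fc f) (gc g) varpi (kappa_dec varsigma Ups sigma) (xi.1.1, xi.2))
    - gamma_s * k_eta * sqnorm (xi.1.2 - sigma (xi.1.1, xi.2)).
  by move=> xi; rewrite -!deriveE //; exact: dVs_eq.
have Vs0 : forall xi, domain (Xs X) xi -> 0 <= Vs sigma V gamma_s xi.
  move=> xi Dxi; rewrite /Vs; apply: addr_ge0; first exact: V0.
  by apply: mulr_ge0; [apply: divr_ge0; [exact: ltW|] | exact: sqnorm_ge0].
split => //; split => //; split; [|split; [|split]].
-
  move=> eps e0.
  have [K2 [cK2 HK2]] := compact_lift (1 + 2 * eps / gamma_s) (C1 eps e0) dsig.
  apply: (subclosed_compact _ cK2).
    have cVs : continuous (Vs sigma V gamma_s) by move=> x; exact: differentiable_continuous.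
    apply: closedI.
      have := @preimage_closed _ _ (fun xi : ('cV[R]_n * 'cV[R]_s) * 'cV[R]_r => xi.1.1) X.
      apply => //; move=> xi _; exact: (lc_comp (lc_fst _ _) (lc_fst _ _)).2.
    have := @preimage_closed _ _ (Vs sigma V gamma_s) [set x | x <= eps].
    apply; [by move=> xi _; exact: cVs | exact: closed_le].
  move=> xi [Dxi Hle].
  have HV0 := V0 (Pm xi) Dxi.
  have hsq := sqnorm_ge0 (xi.1.2 - sigma (Pm xi)).
  have Hle' : V (Pm xi) + gamma_s / 2 * sqnorm (xi.1.2 - sigma (Pm xi)) <= eps by [].
  have Hg2 : 0 <= gamma_s / 2 * sqnorm (xi.1.2 - sigma (Pm xi)).
    by apply: mulr_ge0; [apply: divr_ge0; [exact: ltW|] | exact: sqnorm_ge0].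
  apply: HK2; first by split => //; lra.
  move=> i.
  have sqle : sqnorm (xi.1.2 - sigma (Pm xi)) <= 2 * eps / gamma_s.
    rewrite ler_pdivlMr //; lra.
  have ile : (xi.1.2 - sigma (Pm xi)) i ord0 ^+ 2 <= sqnorm (xi.1.2 - sigma (Pm xi)).
    rewrite /sqnorm (bigD1 i) //= lerDl; apply: sumr_ge0 => j _; exact: sqr_ge0.
  have Bge0 : 0 <= 2 * eps / gamma_s by apply: divr_ge0 => //; [lra | exact: ltW].
  move: ile; rewrite -real_normK ?num_real // => ile.
  set a := `|_| in ile *.
  have a0 : 0 <= a by exact: normr_ge0.
  rewrite expr2 in ile; nra.
-
  move=> xi Dxi; split.
  + move=> /eqP; rewrite /Vs paddr_eq0; [|exact: V0|].
    * move=> /andP[/eqP HV /eqP Hs].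
      have : sqnorm (xi.1.2 - sigma (xi.1.1, xi.2)) = 0.
        move: Hs => /eqP; rewrite mulf_eq0 => /orP[H|/eqP//]; exfalso; move: H.
        by rewrite mulf_eq0 invr_eq0 (negbTE gn0) /= pnatr_eq0.
      move=> /sqnorm_eq0 /eqP; rewrite subr_eq0 => /eqP He.
      by split => //; split => //; apply/C2.
    * by apply: mulr_ge0; [apply: divr_ge0; [exact: ltW|] | exact: sqnorm_ge0].
  + move=> [_ [HA He]]; rewrite /Vs He subrr sqnorm0 mulr0 addr0.
    by apply/C2.
-
  move=> xi Dxi; rewrite key; apply: le_trans (C3 (xi.1.1, xi.2) Dxi).
  rewrite lerBlDr lerDl; apply: mulr_ge0; last exact: sqnorm_ge0.
  by apply: mulr_ge0; exact: ltW.
-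
  have E_fact : forall y, EW (Xs X) (fs f g varsigma Ups) (@gs R n r s) (@varpis R n r s varpi)
      (Vs sigma V gamma_s) (kappas f g varpi varsigma Ups sigma V gamma_s k_eta) y ->
      y.1.2 = sigma (y.1.1, y.2) /\
      EW X (fc f) (gc g) varpi V (kappa_dec varsigma Ups sigma) (y.1.1, y.2).
    move=> y [Dy Hy]; rewrite key in Hy.
    have h1 := C3 (y.1.1, y.2) Dy.
    have h2 := sqnorm_ge0 (y.1.2 - sigma (y.1.1, y.2)).
    have h3 : 0 < gamma_s * k_eta by apply: mulr_gt0.
    have h4 : 0 <= gamma_s * k_eta * sqnorm (y.1.2 - sigma (y.1.1, y.2)) by apply: mulr_ge0 => //; exact: ltW.
    have h5 : gamma_s * k_eta * sqnorm (y.1.2 - sigma (y.1.1, y.2)) = 0 by lra.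
    split; last by split => //; lra.
    move: h5 => /eqP; rewrite mulf_eq0 (gt_eqF h3) /= => /eqP /sqnorm_eq0 /eqP.
    by rewrite subr_eq0 => /eqP.
  have clv_eq : forall y : ('cV[R]_n * 'cV[R]_s) * 'cV[R]_r, y.1.2 = sigma (y.1.1, y.2) ->
      Pm (clvf (fs f g varsigma Ups) (@gs R n r s) (@varpis R n r s varpi)
        (kappas f g varpi varsigma Ups sigma V gamma_s k_eta) y) =
      clvf (fc f) (gc g) varpi (kappa_dec varsigma Ups sigma) (Pm y).
    move=> y He; apply/pair_equal_spec; split => //=.
    by rewrite addr0 /kappabar He.
  have proj : forall xi, PsiW (Xs X) (fs f g varsigma Ups) (@gs R n r s) (@varpis R n r s varpi)
      (Vs sigma V gamma_s) (kappas f g varpi varsigma Ups sigma V gamma_s k_eta) xi ->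
      xi.1.2 = sigma (Pm xi) /\
      PsiW X (fc f) (gc g) varpi V (kappa_dec varsigma Ups sigma) (Pm xi).
    move=> xi [M [MsubE [Mfwd Mbwd]] Mxi].
    have Eh := fun y (My : M y) => E_fact y (MsubE y My).
    split; first exact: (Eh xi Mxi).1.
    exists [set Pm y | y in M]; last by exists xi.
    split; first by move=> _ [y My <-]; exact: (Eh y My).2.
    split.
    + move=> _ [y My <-]; have [phi [phi0 [sol inv]]] := Mfwd y My.
      exists (fun u => Pm (phi u)); split; first by rewrite phi0.
      split; last by move=> t t0; exists (phi t) => //; exact: inv.
      move=> t t0; have [Dt Dd] := sol t t0; split; first exact: Dt.
      rewrite -clv_eq; last exact: (Eh _ (inv t t0)).1.
      exact: (is_derive_lin (@lc_Pm R n s r) Dd).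
    + move=> _ [q Mq <-] T Tp; have [phi [M0 [phiT [sol inv]]]] := Mbwd q Mq T Tp.
      exists (fun u => Pm (phi u)); split; first by exists (phi 0).
      split; first by rewrite phiT.
      split; last by move=> t t0; exists (phi t) => //; exact: inv.
      move=> t t0; have [Dt Dd] := sol t t0; split; first exact: Dt.
      rewrite -clv_eq; last exact: (Eh _ (inv t t0)).1.
      exact: (is_derive_lin (@lc_Pm R n s r) Dd).
  have [d [dd dlb]] : exists d : R, delta < d /\ forall pt,
      (PsiW X (fc f) (gc g) varpi V (kappa_dec varsigma Ups sigma) `\` A) pt ->
      d <= muW V Theta pt.
    move: C4; case E: (ereal_inf _) => [l| |] HC4.
    + exists l; split; first by rewrite lte_fin in HC4.
      move=> pt Hpt; rewrite -lee_fin -E; apply: ereal_inf_lbound; by exists pt.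
    + exists (delta + 1); split; first lra.
      move=> pt Hpt; have : (+oo <= (muW V Theta pt)%:E)%E.
        rewrite -E; apply: ereal_inf_lbound; by exists pt.
      by rewrite leye_eq.
    + by move: HC4; rewrite ltNge leNye.
  apply: (@lt_le_trans _ _ (d - gamma_s * c_kappa)%:E).
    rewrite lte_fin; lra.
  apply: le_ereal_inf_tmp => _ [xi [Pxi nAs] <-]; rewrite lee_fin.
  have [He Ppt] := proj xi Pxi.
  have Dxi : X xi.1.1.
    by case: Pxi => M [MsubE _] Mxi; exact: (MsubE _ Mxi).1.
  have nA : ~ A (Pm xi) by move=> HA; apply: nAs; split => //; split.
  have := dlb (Pm xi) (conj Ppt nA).
  have VsE : Vs sigma V gamma_s xi = V (Pm xi).
    by rewrite /Vs He subrr sqnorm0 mulr0 addr0.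
  set Sn := [set Vs sigma V gamma_s (xi.1, tb) | tb in Theta].
  set So := [set V ((Pm xi).1, tb) | tb in Theta].
  have Hinf : inf Sn - gamma_s * c_kappa <= inf So.
    apply: lb_le_inf.
      by case: T0 => tb Ttb; exists (V ((Pm xi).1, tb)); exists tb.
    move=> _ [tb Ttb <-].
    have lbS : has_lbound Sn.
      exists 0 => _ [tb' _ <-]; exact: Vs0.
    have H1 : inf Sn <= Vs sigma V gamma_s (xi.1, tb).
      by apply: ge_inf => //; exists tb.
    have H2 := As1 (Pm xi) (conj Ppt nA) tb Ttb.
    have H3 : gamma_s / 2 * sqnorm (xi.1.2 - sigma (xi.1.1, tb)) <= gamma_s * c_kappa.
      have -> : gamma_s * c_kappa = gamma_s / 2 * (2 * c_kappa) by field.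
      apply: ler_wpM2l; first by apply: divr_ge0; [exact: ltW|].
      by rewrite He.
    move: H1; rewrite /Vs /=.
    move: H3; rewrite /=; lra.
  rewrite /muW VsE -/Sn -/So; lra.
Qed.
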